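(* For $n\ge1$, as polynomial identities in the variables $x_1,\dots,x_{n+1}$ (the ratios being polynomials): (1) for $\nu\in W^{n+1}$, $$\left.\frac{\det(Q_{\nu_i}(x_j))_{i,j=1}^{n+1}}{\det(x_j^{i-1})_{i,j=1}^{n+1}}\right|_{x_1=0}=\frac{(-1)^n}{\lambda_0^n}\sum_{k\in W^{n,n+1}(\nu)}\prod_{i=1}^n\hat\pi_{k_i}\,\frac{\det(\hat Q_{k_i}(x_{j+1}))_{i,j=1}^n}{\det(x_{j+1}^{i-1})_{i,j=1}^n};$$ (2) for $\nu\in W^n$, $$\frac{\det(\hat Q_{\nu_i}(x_j))_{i,j=1}^n}{\det(x_j^{i-1})_{i,j=1}^n}=\sum_{k\in W^{n,n}(\nu)}\prod_{i=1}^n\pi_{k_i}\,\frac{\det(Q_{k_i}(x_j))_{i,j=1}^n}{\det(x_j^{i-1})_{i,j=1}^n}.$$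
   Context: Let $\lambda_k=\lambda(k)>0$ ($k\ge0$) and $\mu_k=\mu(k)$ with $\mu_0=0$, $\mu_k>0$ ($k\ge1$) be the rates of a birth and death chain on $\mathbb N=\{0,1,\dots\}$ reflecting at $0$, with $\pi_0=1$, $\pi_k=\prod_{i=1}^k\lambda_{i-1}/\mu_i$. Dual rates: $\hat\lambda_k=\mu_{k+1}$, $\hat\mu_k=\lambda_k$; $\hat\pi_0=1$, $\hat\pi_k=\prod_{i=1}^k\mu_i/\lambda_i$. Polynomials $Q_n,\hat Q_n$ (degree $n$) are defined by $Q_{-1}=\hat Q_{-1}=0$, $Q_0=\hat Q_0=1$ and, for $n\ge0$, $-xQ_n(x)=\mu_nQ_{n-1}(x)-(\lambda_n+\mu_n)Q_n(x)+\lambda_nQ_{n+1}(x)$ and $-x\hat Q_n(x)=\lambda_n\hat Q_{n-1}(x)-(\mu_{n+1}+\lambda_n)\hat Q_n(x)+\mu_{n+1}\hat Q_{n+1}(x)$. $W^n=\{\nu\in\mathbb N^n:\nu_1<\dots<\nu_n\}$; for $\nu\in W^{n+1}$, $W^{n,n+1}(\nu)=\{k\in W^n:\nu_1\le k_1<\nu_2\le k_2<\dots\le k_n<\nu_{n+1}\}$; for $\nu\in W^n$, $W^{n,n}(\nu)=\{k\in W^n:k_1\le\nu_1<k_2\le\nu_2<\dots<k_n\le\nu_n\}$. $\det(x_j^{i-1})_{i,j=1}^n=\prod_{i<j}(x_j-x_i)$. *)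

(* Defs.v *)
From HB Require Import structures.
From mathcomp Require Import all_boot all_order all_algebra.
Set Implicit Arguments. Unset Strict Implicit. Unset Printing Implicit Defensive.
Import Order.TTheory GRing.Theory Num.Theory.
Local Open Scope ring_scope.

Section BD.
Variable R : realFieldType.

(* QQ lam mu n = (Q_{n-1}, Q_n), with Q_{-1} = 0, Q_0 = 1 and
   lam_n Q_{n+1} = ((lam_n + mu_n) - X) Q_n - mu_n Q_{n-1}. *)
Fixpoint QQ (lam mu : nat -> R) (n : nat) : {poly R} * {poly R} :=
  match n with
  | 0 => (0, 1)
  | m.+1 => let (a, b) := QQ lam mu m in
            (b, (lam m)^-1 *: (((lam m + mu m)%:P - 'X) * b - mu m *: a))
  end.

Definition Qpol (lam mu : nat -> R) (n : nat) : {poly R} := (QQ lam mu n).2.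

Definition hatQpol (lam mu : nat -> R) (n : nat) : {poly R} :=
  Qpol (fun k => mu k.+1) lam n.

Definition piw (lam mu : nat -> R) (k : nat) : R :=
  \prod_(1 <= i < k.+1) (lam i.-1 / mu i).
Definition hatpiw (lam mu : nat -> R) (k : nat) : R :=
  \prod_(1 <= i < k.+1) (mu i / lam i).

Definition detratio (m : nat) (P : nat -> {poly R}) (nu : 'I_m -> nat)
    (x : 'I_m -> R) : R :=
  \det (\matrix_(i < m, j < m) (P (nu i)).[x j]) /
  \det (\matrix_(i < m, j < m) (x j ^+ i)).
End BD.

Definition inW (n : nat) (v : 'I_n -> nat) : bool :=
  [forall i : 'I_n, forall j : 'I_n, (i < j)%N ==> (v i < v j)%N].

Definition interlace_up (n : nat) (nu : 'I_n.+1 -> nat) (k : 'I_n -> nat) : bool :=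
  [forall i : 'I_n, (nu (widen_ord (leqnSn n) i) <= k i)%N && (k i < nu (lift ord0 i))%N].

Definition interlace_eq (n : nat) (nu : 'I_n -> nat) (k : 'I_n -> nat) : bool :=
  [forall i : 'I_n, (k i <= nu i)%N &&
     [forall j : 'I_n, (nat_of_ord j == (nat_of_ord i).+1) ==> (nu i < k j)%N]].

(* Main.v *)
Require Import Defs.
From HB Require Import structures.
From mathcomp Require Import all_boot all_order all_algebra.
From mathcomp Require Import ring lra.
Import Order.TTheory GRing.Theory Num.Theory.
Local Open Scope ring_scope.

Section Rec.
Variable R : realFieldType.
Implicit Types lam mu : nat -> R.

Lemma QQ_fst lam mu k : (QQ lam mu k.+1).1 = Qpol lam mu k.
Proof. by rewrite /Qpol /=; case: (QQ lam mu k). Qed.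

Lemma Qpol_S lam mu k : Qpol lam mu k.+1 =
  (lam k)^-1 *: (((lam k + mu k)%:P - 'X) * Qpol lam mu k - mu k *: (QQ lam mu k).1).
Proof. by rewrite /Qpol /=; case: (QQ lam mu k). Qed.

Lemma Qpol0 lam mu : Qpol lam mu 0 = 1. Proof. by []. Qed.
Lemma QQ0 lam mu : (QQ lam mu 0).1 = 0. Proof. by []. Qed.

Lemma hornerQS lam mu k x : (Qpol lam mu k.+1).[x] =
  (lam k)^-1 * ((lam k + mu k - x) * (Qpol lam mu k).[x] - mu k * ((QQ lam mu k).1).[x]).
Proof. by rewrite Qpol_S !hornerE. Qed.

Lemma piw_S lam mu k : piw lam mu k.+1 = piw lam mu k * (lam k / mu k.+1).
Proof. by rewrite /piw big_nat_recr. Qed.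

Lemma hatpiw_S lam mu k : hatpiw lam mu k.+1 = hatpiw lam mu k * (mu k.+1 / lam k.+1).
Proof. by rewrite /hatpiw big_nat_recr. Qed.

Lemma piw0 lam mu : piw lam mu 0 = 1. Proof. by rewrite /piw big_geq. Qed.
Lemma hatpiw0 lam mu : hatpiw lam mu 0 = 1. Proof. by rewrite /hatpiw big_geq. Qed.

Variables (lam mu : nat -> R).
Hypothesis hlam : forall k, lam k != 0.
Hypothesis hmu0 : mu 0%N = 0.
Hypothesis hmu : forall k, mu k.+1 != 0.

Lemma Q_at0 k : (Qpol lam mu k).[0] = 1.
Proof.
suff : (Qpol lam mu k).[0] = 1 /\ mu k * ((QQ lam mu k).1).[0] = mu k by case.
elim: k => [|k [IH1 IH2]]; first by rewrite Qpol0 QQ0 hmu0 !hornerE; split.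
rewrite QQ_fst hornerQS IH1 IH2 mulr1; split; last by rewrite mulr1.
by rewrite subr0 addrK mulVf.
Qed.

Definition Ssum x k := \sum_(j < k.+1) piw lam mu j * (Qpol lam mu j).[x].

Lemma lemE x k : piw lam mu k * lam k * ((Qpol lam mu k.+1).[x] - (Qpol lam mu k).[x])
   = - x * Ssum x k.
Proof.
elim: k => [|k IH].
  rewrite /Ssum big_ord1 piw0 hornerQS Qpol0 QQ0 hmu0 !hornerE.
  by rewrite /= mulr1; field; apply: hlam.
rewrite /Ssum big_ord_recr /= (_ : \sum_(i < k.+1) _ = Ssum x k) // [RHS]mulrDr -IH hornerQS QQ_fst piw_S.
by field; rewrite hlam hmu.
Qed.

Lemma lemB x k : (hatQpol lam mu k).[x] = Ssum x k.
Proof.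
suff : (hatQpol lam mu k).[x] = Ssum x k /\
       ((QQ (fun k => mu k.+1) lam k).1).[x] = Ssum x k - piw lam mu k * (Qpol lam mu k).[x]
  by case.
rewrite /hatQpol.
elim: k => [|k [IH1 IH2]].
  by rewrite Qpol0 QQ0 /Ssum big_ord1 piw0 !hornerE /= subrr.
rewrite (QQ_fst (fun k0 => mu k0.+1) lam k) IH1 /Ssum big_ord_recr /= -/(Ssum x k); split; last by rewrite addrK.
rewrite hornerQS IH1 IH2.
have := lemE x k; rewrite piw_S => HE.
rewrite mulrDl -HE; field; by rewrite hmu.
Qed.

Lemma piprod k : piw lam mu k * lam k * hatpiw lam mu k = lam 0.
Proof.
elim: k => [|k IH]; first by rewrite piw0 hatpiw0 mul1r mulr1.
rewrite piw_S hatpiw_S -{}IH; field; by rewrite hlam hmu.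
Qed.

Lemma lemA x k : (Qpol lam mu k.+1).[x] - (Qpol lam mu k).[x] =
   - (hatpiw lam mu k / lam 0) * (x * (hatQpol lam mu k).[x]).
Proof.
have HE := lemE x k; have HP := piprod k.
have : lam 0 != 0 by apply: hlam.
rewrite -HP !mulf_eq0 !negb_or => /andP[/andP[h1 h2] h3].
rewrite lemB.
apply: (mulfI (mulf_neq0 h1 h2)); rewrite HE; field.
by rewrite h1 h2 h3.
Qed.
End Rec.
Lemma det_sum_rows (R : comNzRingType) m M (c : 'I_m -> 'I_M -> R)
  (P : 'I_M -> 'I_m -> R) (Pr : 'I_m -> pred 'I_M) :
  \det (\matrix_(i, j) \sum_(k | Pr i k) c i k * P k j) =
  \sum_(f : {ffun 'I_m -> 'I_M} | [forall i, Pr i (f i)])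
     (\prod_i c i (f i)) * \det (\matrix_(i, j) P (f i) j).
Proof.
rewrite /determinant.
under eq_bigr => s _.
  under eq_bigr => i _ do rewrite mxE.
  rewrite bigA_distr_big_dep mulr_sumr.
  over.
rewrite exchange_big /=.
apply: eq_big => [f|f _].
  by apply/familyP/forallP => H i; have := H i.
rewrite mulr_sumr; apply: eq_bigr => s _.
rewrite big_split /=.
under [in X in _ = _ * (_ * X)]eq_bigr => i _ do rewrite mxE.
by rewrite mulrCA.
Qed.

Lemma det_telescope (R : comNzRingType) m (A B : 'M[R]_m) :
  (forall i j, A i j = \sum_(l < m | (l <= i)%N) B l j) -> \det A = \det B.
Proof.
move=> H.
have -> : A = (\matrix_(i, l) ((l <= i)%N)%:R) *m B.
  apply/matrixP => i j; rewrite H !mxE big_mkcond /=.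
  by apply: eq_bigr => l _; rewrite mxE; case: ifP => _; rewrite ?mul1r ?mul0r.
rewrite det_mulmx det_trig.
  by rewrite big1 ?mul1r // => i _; rewrite mxE leqnn.
by apply/is_trig_mxP => i j ij; rewrite mxE leqNgt ij.
Qed.
Lemma sum_window (R : zmodType) M a b (F : nat -> R) : (a <= b)%N -> (b <= M)%N ->
  F b - F a = \sum_(k < M | (a <= k < b)%N) (F k.+1 - F k).
Proof.
move=> ab bM.
rewrite -telescope_sumr // (@big_nat_widenl _ _ _ a 0 b xpredT _ (leq0n a)) (big_nat_widen _ _ M) //.
by rewrite big_mkord.
Qed.

Lemma inW_lt n (v : 'I_n -> nat) (i j : 'I_n) : inW v -> (i < j)%N -> (v i < v j)%N.
Proof. by move=> /forallP/(_ i)/forallP/(_ j)/implyP. Qed.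

Lemma inW_le n (v : 'I_n -> nat) (i j : 'I_n) : inW v -> (i <= j)%N -> (v i <= v j)%N.
Proof.
move=> h; rewrite leq_eqVlt => /orP[/eqP ij|ij]; last by apply: ltnW; apply: inW_lt.
by rewrite (_ : i = j) //; apply: val_inj.
Qed.

Lemma inW_cons n (v : 'I_n -> nat) :
  (forall i j : 'I_n, val j = (val i).+1 -> (v i < v j)%N) -> inW v.
Proof.
move=> H; apply/forallP => i; apply/forallP => j; apply/implyP => ij.
suff: forall d (i j : 'I_n), val j = (i + d.+1)%N -> (v i < v j)%N.
  by move/(_ (j - i.+1)%N i j); apply; rewrite subnSK // addnC subnK // ltnW.
elim=> [|d IH] {i j ij} i j hj; first by apply: H; rewrite hj addn1.
have hj' : (i + d.+1 < n)%N by move: (ltn_ord j); rewrite hj addnS => /ltnW.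
apply: (ltn_trans (IH i (Ordinal hj') erefl)); apply: H => /=.
by rewrite hj addnS.
Qed.

Lemma sum_window2 (R : zmodType) M a b (g : nat -> R) : (a <= b)%N -> (b <= M)%N ->
  \sum_(k < M | (a <= k < b)%N) g k = \sum_(k < b) g k - \sum_(k < a) g k.
Proof.
move=> ab bM; rewrite (@sum_window _ M a b (fun t => \sum_(k < t) g k) ab bM).
by apply: eq_bigr => k _; rewrite big_ord_recr /= addrAC subrr add0r.
Qed.
Lemma part2 (R : realFieldType) (lam mu : nat -> R) (hlam : forall k, lam k != 0)
  (hmu0 : mu 0%N = 0) (hmu : forall k, mu k.+1 != 0) n (nu : 'I_n.+1 -> nat) :
  inW nu -> forall x : 'I_n.+1 -> R,
  detratio (hatQpol lam mu) nu x =
     \sum_(k : {ffun 'I_n.+1 -> 'I_(\max_(i < n.+1) nu i).+1} |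
             inW (fun i => nat_of_ord (k i)) &&
             interlace_eq nu (fun i => nat_of_ord (k i)))
        (\prod_(i < n.+1) piw lam mu (k i)) *
        detratio (Qpol lam mu) (fun i => nat_of_ord (k i)) x.
Proof.
move=> hnu x.
set M := (\max_(i < n.+1) nu i).+1.
pose hi (l : nat) := (nu (inord l)).+1.
pose lo (l : nat) := if l is l'.+1 then hi l' else 0%N.
have hiM l : (hi l <= M)%N by rewrite ltnS (leq_bigmax (inord l)).
have lohi l : (l < n.+1)%N -> (lo l <= hi l)%N.
  case: l => [|l] hl //=; rewrite ltnS; apply: inW_le => //.
  by rewrite !inordK // ltnW.
have HA : \det (\matrix_(i, j) (hatQpol lam mu (nu i)).[x j]) =
  \det (\matrix_(l < n.+1, j < n.+1)
     \sum_(k < M | (lo l <= k < hi l)%N) piw lam mu k * (Qpol lam mu k).[x j]).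
  apply: det_telescope => i j; rewrite !mxE.
  under eq_bigr => l _ do rewrite mxE (@sum_window2 _ _ _ _ (fun k => piw lam mu k * (Qpol lam mu k).[x j]) (lohi l (ltn_ord l)) (hiM l)).
  rewrite (big_ord_narrow_leq (ltn_ord i : (i <= n)%N)).
  rewrite -(big_mkord xpredT (fun l => \sum_(k < hi l) piw lam mu k * (Qpol lam mu k).[x j] -
     \sum_(k < lo l) piw lam mu k * (Qpol lam mu k).[x j])).
  rewrite (telescope_sumr_eq (fun l => \sum_(k < lo l) piw lam mu k * (Qpol lam mu k).[x j])) //.
  by rewrite big_ord0 subr0 /= /hi inord_val (@lemB R lam mu hlam hmu0 hmu).
rewrite /detratio HA.
rewrite (@det_sum_rows _ _ _ (fun _ k => piw lam mu k) (fun k j => (Qpol lam mu k).[x j])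
           (fun (i : 'I_n.+1) (k : 'I_M) => (lo i <= k < hi i)%N)).
rewrite mulr_suml.
apply: eq_big => [f | f _]; last by rewrite mulrA.
apply/forallP/andP.
  move=> H; split.
    apply: inW_cons => i j hj.
    have /andP[_ h1] := H i; have /andP[h2 _] := H j.
    move: h1 h2; rewrite /lo hj /hi inord_val ltnS => h1 h2.
    exact: leq_ltn_trans h1 h2.
  apply/forallP => i; have /andP[_ h1] := H i.
  rewrite /hi inord_val ltnS in h1; rewrite h1 /=.
  apply/forallP => j; apply/implyP => /eqP hj.
  by have /andP[h2 _] := H j; move: h2; rewrite /lo hj /hi inord_val.
case=> hw /forallP hI i.
have /andP[h1 /forallP h2] := hI i.
apply/andP; split; last by rewrite /hi inord_val ltnS.
rewrite /lo; case E: (nat_of_ord i) => [|l] //.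
have hl : (l < n.+1)%N by rewrite -ltnS -E ltnS ltnW.
have /andP[_ /forallP h3] := hI (inord l).
by have := h3 i; rewrite E inordK // eqxx /=.
Qed.
Lemma det_colscale (R : comNzRingType) m (A : 'M[R]_m) (d : 'I_m -> R) :
  \det (\matrix_(i, j) (d j * A i j)) = \det A * \prod_j d j.
Proof.
have -> : \matrix_(i, j) (d j * A i j) = A *m diag_mx (\row_j d j).
  by rewrite mul_mx_diag; apply/matrixP => i j; rewrite !mxE mulrC.
by rewrite det_mulmx det_diag; congr (_ * _); apply: eq_bigr => i _; rewrite mxE.
Qed.

Lemma det_colscale' (R : comNzRingType) m (A : 'I_m -> 'I_m -> R) (d : 'I_m -> R) :
  \det (\matrix_(i, j) (d j * A i j)) = \det (\matrix_(i, j) A i j) * \prod_j d j.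
Proof.
rewrite -det_colscale; congr (\det _); apply/matrixP => i j; by rewrite !mxE.
Qed.

Lemma vander0 (R : comNzRingType) n (x : 'I_n.+1 -> R) : x ord0 = 0 ->
  \det (\matrix_(i < n.+1, j < n.+1) x j ^+ i) =
  \det (\matrix_(i < n, j < n) x (lift ord0 j) ^+ i) * \prod_j x (lift ord0 j).
Proof.
move=> x0.
rewrite (expand_det_col _ ord0) big_ord_recl big1 ?addr0; last first.
  by move=> i _; rewrite mxE x0 lift0 expr0n mul0r.
rewrite mxE expr0 mul1r /cofactor /= expr0 mul1r -det_colscale.
by congr (\det _); apply/matrixP => i j; rewrite !mxE lift0 exprS.
Qed.

Lemma part1 (R : realFieldType) (lam mu : nat -> R) (hlam : forall k, lam k != 0)
  (hmu0 : mu 0%N = 0) (hmu : forall k, mu k.+1 != 0) n (nu : 'I_n.+1 -> nat) :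
  inW nu -> forall x : 'I_n.+1 -> R, injective x -> x ord0 = 0 ->
     detratio (Qpol lam mu) nu x =
     (-1) ^+ n / lam 0%N ^+ n *
     \sum_(k : {ffun 'I_n -> 'I_(nu ord_max).+1} |
             inW (fun i => nat_of_ord (k i)) &&
             interlace_up nu (fun i => nat_of_ord (k i)))
        (\prod_(i < n) hatpiw lam mu (k i)) *
        detratio (hatQpol lam mu) (fun i => nat_of_ord (k i))
                 (fun j => x (lift ord0 j)).
Proof.
move=> hnu x xinj x0.
set M := (nu ord_max).+1.
pose hi (l : nat) := nu (inord l).
pose y (j : 'I_n) := x (lift ord0 j).
have hy j : y j != 0.
  rewrite /y -x0; apply/eqP => /xinj h.
  by move: (neq_lift ord0 j); rewrite h eqxx.
have hiM l : (hi l < M)%N by rewrite ltnS; apply: inW_le => //; exact: leq_ord.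
have hihi l : (l < n)%N -> (hi l <= hi l.+1)%N.
  move=> hl; have h1 : (l < n.+1)%N by exact: ltnW.
  by apply: inW_le => //; rewrite !inordK.
have hiW (i : 'I_n) : hi i = nu (widen_ord (leqnSn n) i).
  by rewrite /hi; congr nu; apply: val_inj; rewrite /= inordK // (ltn_trans (ltn_ord i)).
have hiL (i : 'I_n) : hi i.+1 = nu (lift ord0 i).
  by rewrite /hi; congr nu; apply: val_inj; rewrite /= inordK ?ltnS //=.
pose fb (l : nat) (j : 'I_n.+1) := if l is l'.+1 then (Qpol lam mu (hi l')).[x j] else 0.
have HB : \det (\matrix_(i, j) (Qpol lam mu (nu i)).[x j]) =
   \det (\matrix_(l < n.+1, j < n.+1) ((Qpol lam mu (hi l)).[x j] - fb l j)).
  apply: det_telescope => i j; rewrite !mxE.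
  under eq_bigr => l _ do rewrite mxE.
  rewrite (big_ord_narrow_leq (ltn_ord i : (i <= n)%N)).
  rewrite -(big_mkord xpredT (fun l => (Qpol lam mu (hi l)).[x j] - fb l j)).
  rewrite (telescope_sumr_eq (fun l => fb l j)) //.
  by rewrite subr0 /= /hi inord_val.
have HQ0 k : (Qpol lam mu k).[0] = 1 by apply: (@Q_at0 R lam mu hlam hmu0).
have HC : \det (\matrix_(l < n.+1, j < n.+1) ((Qpol lam mu (hi l)).[x j] - fb l j)) =
   \det (\matrix_(i < n, j < n) \sum_(k < M | (hi i <= k < hi i.+1)%N)
        (- (hatpiw lam mu k / lam 0%N)) * (y j * (hatQpol lam mu k).[y j])).
  rewrite (expand_det_col _ ord0) big_ord_recl big1 ?addr0; last first.
    by move=> i _; rewrite mxE /fb lift0 x0 !HQ0 subrr mul0r.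
  rewrite mxE /fb x0 HQ0 subr0 mul1r /cofactor /= expr0 mul1r.
  congr (\det _); apply/matrixP => i j; rewrite !mxE lift0.
  rewrite (@sum_window _ M _ _ (fun t => (Qpol lam mu t).[y j]) (hihi i (ltn_ord i)) (ltnW (hiM _))).
  by apply: eq_bigr => k _; rewrite (@lemA R lam mu hlam hmu0 hmu).
rewrite /detratio HB HC vander0 //.
rewrite (@det_sum_rows _ _ _ (fun _ k => - (hatpiw lam mu k / lam 0%N))
           (fun k j => y j * (hatQpol lam mu k).[y j])
           (fun (i : 'I_n) (k : 'I_M) => (hi i <= k < hi i.+1)%N)).
rewrite mulr_suml mulr_sumr.
apply: eq_big => [f | f _].
  apply/forallP/andP.
    move=> H; split.
      apply: inW_cons => i j hj.
      have /andP[_ h1] := H i; have /andP[h2 _] := H j.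
      rewrite hj in h2; exact: leq_trans h1 h2.
    by apply/forallP => i; have := H i; rewrite hiW hiL.
  by case=> _ /forallP hI i; have := hI i; rewrite hiW hiL.
rewrite (@det_colscale' _ _ (fun i j => (hatQpol lam mu (f i)).[y j]) y).
have -> : \prod_(i < n) - (hatpiw lam mu (f i) / lam 0%N) =
          (-1) ^+ n / lam 0%N ^+ n * \prod_(i < n) hatpiw lam mu (f i).
  rewrite -expr_div_n.
  have -> : ((-1) / lam 0%N) ^+ n = \prod_(i < n) ((-1) / lam 0%N) by rewrite prodr_const card_ord.
  rewrite -big_split /=.
  by apply: eq_bigr => i _; rewrite mulNr mul1r mulrC mulNr.
have py : \prod_j y j != 0 by apply/prodf_neq0 => j _; apply: hy.
move: (\prod_j y j) py => p py.
move: ((-1) ^+ n / lam 0%N ^+ n) => K.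
rewrite /y invfM.
move: (\det _)^-1 => a.
by field.
Qed.
(* Sums over W^{n,n+1}(nu) (resp. W^{n,n}(nu)) are taken over k : 'I_n -> 'I_M
   with M = nu_{n+1} + 1 (resp. max_i nu_i + 1 = nu_n + 1); every element of these sets has all
   entries < M, so this enumerates the sets exactly. *)
Theorem proposition7p1 (R : realFieldType) (lam mu : nat -> R)
  (hlam : forall k, 0 < lam k) (hmu0 : mu 0%N = 0)
  (hmu : forall k, (0 < k)%N -> 0 < mu k) (n : nat) (hn : (1 <= n)%N) :
  (forall (nu : 'I_n.+1 -> nat), inW nu ->
   forall x : 'I_n.+1 -> R, injective x -> x ord0 = 0 ->
     detratio (Qpol lam mu) nu x =
     (-1) ^+ n / lam 0%N ^+ n *
     \sum_(k : {ffun 'I_n -> 'I_(nu ord_max).+1} |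
             inW (fun i => nat_of_ord (k i)) &&
             interlace_up nu (fun i => nat_of_ord (k i)))
        (\prod_(i < n) hatpiw lam mu (k i)) *
        detratio (hatQpol lam mu) (fun i => nat_of_ord (k i))
                 (fun j => x (lift ord0 j)))
  /\
  (forall (nu : 'I_n -> nat), inW nu ->
   forall x : 'I_n -> R, injective x ->
     detratio (hatQpol lam mu) nu x =
     \sum_(k : {ffun 'I_n -> 'I_(\max_(i < n) nu i).+1} |
             inW (fun i => nat_of_ord (k i)) &&
             interlace_eq nu (fun i => nat_of_ord (k i)))
        (\prod_(i < n) piw lam mu (k i)) *
        detratio (Qpol lam mu) (fun i => nat_of_ord (k i)) x).
Proof.
have hl k : lam k != 0 by rewrite gt_eqF.
have hm k : mu k.+1 != 0 by rewrite gt_eqF // hmu.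
split.
  by move=> nu hnu x xinj x0; exact: (@part1 R lam mu hl hmu0 hm n nu hnu x xinj x0).
case: n hn => // n _ nu hnu x xinj.
exact: (@part2 R lam mu hl hmu0 hm n nu hnu x).
Qed.
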